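(* Consider a two-user ($N=2$) multi-hop decode-and-forward relay network with $L\ge 2$ hops and a fixed relay assignment, with powers, SINRs and sum-rate as defined in the context. Then there exists a power allocation $\mathbf{P}^*\in[0,P]^{2L}$ maximizing the sum-rate $R(\mathbf{P})$ over $[0,P]^{2L}$ such that (i) at least two of the $2L$ transmit powers $P^*_{i,l}$ are binary, i.e., belong to $\{0,P\}$, and (ii) the remaining transmit powers are determined by SINR matching, i.e., by the equalities $\gamma_{i,1}(\mathbf{P}^* )=\gamma_{i,l}(\mathbf{P}^* )$ for all $i\in\{1,2\}$ and all $l\in\{2,\dots,L\}$.
   Context: Setup: there are two source–destination (S-D) pairs (users) $i\in\{1,2\}$, whose information travels over $L$ hops. For a fixed relay assignment, user $i$ uses a path of nodes $r_{i,0},r_{i,1},\dots,r_{i,L}$ (source $r_{i,0}$, destination $r_{i,L}$, distinct relays of the two users in each intermediate hop). In hop $l\in\{1,\dots,L\}$ the two transmitting nodes $r_{1,l-1},r_{2,l-1}$ transmit simultaneously with powers $P_{1,l-1},P_{2,l-1}\in[0,P]$, where $P>0$ is the maximum transmit power. Let $g_{j,i,l}=|h[r_{j,l-1},r_{i,l},l]|^2>0$ denote the channel power gain from the transmitter of user $j$ to the receiver of user $i$ in hop $l$, and let $\sigma^2>0$ be the noise variance. The SINR of user $i$ in hop $l$ (interference treated as noise, $j\neq i$ the other user) is $\gamma_{i,l}(\mathbf{P})=\dfrac{P_{i,l-1}\,g_{i,i,l}}{\sigma^2+P_{j,l-1}\,g_{j,i,l}}$. The end-to-end SINR of user $i$ is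 $\min_{l\in\{1,\dots,L\}}\gamma_{i,l}$ and the sum-rate is $R(\mathbf{P})=\sum_{i=1}^{2}\log_2(1+\min_{l}\gamma_{i,l}(\mathbf{P}))$. SINR matching means choosing the powers along each user's path so that the SINRs of that user at all receiving nodes of its path are equal. *)

(* Defs.v *)
From Stdlib Require Import Reals List.
Import ListNotations.
Open Scope R_scope.

(* Users are indexed by i in {1,2}; hops by l in {1,...,L}.
   A power allocation is p : nat -> nat -> R, where p i k is P_{i,k}
   (the transmit power of node r_{i,k}), k in {0,...,L-1}.
   Channel power gains: g j i l = g_{j,i,l} = |h[r_{j,l-1}, r_{i,l}, l]|^2
   (from transmitter of user j to receiver of user i in hop l). *)

Definition is_user (i : nat) : Prop := i = 1%nat \/ i = 2%nat.

Definition other (i : nat) : nat := if Nat.eqb i 1 then 2%nat else 1%nat.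

Definition sinr (g : nat -> nat -> nat -> R) (sigma2 : R)
  (p : nat -> nat -> R) (i l : nat) : R :=
  p i (l - 1)%nat * g i i l / (sigma2 + p (other i) (l - 1)%nat * g (other i) i l).

Definition min_hops (f : nat -> R) (L : nat) : R :=
  fold_right Rmin (f 1%nat) (map f (seq 1 L)).

Definition log2 (x : R) : R := ln x / ln 2.

Definition sum_rate (L : nat) (g : nat -> nat -> nat -> R) (sigma2 : R)
  (p : nat -> nat -> R) : R :=
  log2 (1 + min_hops (sinr g sigma2 p 1) L)
  + log2 (1 + min_hops (sinr g sigma2 p 2) L).

Definition feasible (L : nat) (Pmax : R) (p : nat -> nat -> R) : Prop :=
  forall i k, is_user i -> (k < L)%nat -> 0 <= p i k <= Pmax.

(* Main.v *)
Require Import Defs.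
From Stdlib Require Import Reals.
From Stdlib Require Import Lra Psatz Lia List Classical FunctionalExtensionality.
Import ListNotations.
Open Scope R_scope.

Lemma cpt_id c : continuity_pt (fun x => x) c.
Proof. apply derivable_continuous_pt, derivable_pt_id. Qed.
Lemma cpt_const k c : continuity_pt (fun _ => k) c.
Proof. apply continuity_pt_const; intros a b; reflexivity. Qed.
Lemma cpt_plus f g c : continuity_pt f c -> continuity_pt g c -> continuity_pt (fun x => f x + g x) c.
Proof. intros H H0; exact (continuity_pt_plus f g c H H0). Qed.
Lemma cpt_minus f g c : continuity_pt f c -> continuity_pt g c -> continuity_pt (fun x => f x - g x) c.
Proof. intros H H0; exact (continuity_pt_minus f g c H H0). Qed.
Lemma cpt_mult f g c : continuity_pt f c -> continuity_pt g c -> continuity_pt (fun x => f x * g x) c.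
Proof. intros H H0; exact (continuity_pt_mult f g c H H0). Qed.
Lemma cpt_div f g c : continuity_pt f c -> continuity_pt g c -> g c <> 0 -> continuity_pt (fun x => f x / g x) c.
Proof. intros H H0 H1; exact (continuity_pt_div f g c H H0 H1). Qed.
Lemma cpt_abs f c : continuity_pt f c -> continuity_pt (fun x => Rabs (f x)) c.
Proof. intros H; exact (continuity_pt_comp f Rabs c H (Rcontinuity_abs (f c))). Qed.
Lemma Rmin_abs a b : Rmin a b = (a + b - Rabs (a - b)) / 2.
Proof. unfold Rmin; destruct (Rle_dec a b); [rewrite Rabs_left1 | rewrite Rabs_right]; lra. Qed.
Lemma Rmax_abs a b : Rmax a b = (a + b + Rabs (a - b)) / 2.
Proof. unfold Rmax; destruct (Rle_dec a b); [rewrite Rabs_left1 | rewrite Rabs_right]; lra. Qed.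
Lemma cpt_min f g c : continuity_pt f c -> continuity_pt g c -> continuity_pt (fun x => Rmin (f x) (g x)) c.
Proof.
  intros H H0.
  replace (fun x => Rmin (f x) (g x)) with (fun x => (f x + g x - Rabs (f x - g x)) / 2)
    by (extensionality x; symmetry; apply Rmin_abs).
  apply cpt_div; [| apply cpt_const | lra].
  apply cpt_minus; [apply cpt_plus; auto | apply cpt_abs, cpt_minus; auto].
Qed.
Lemma cpt_max f g c : continuity_pt f c -> continuity_pt g c -> continuity_pt (fun x => Rmax (f x) (g x)) c.
Proof.
  intros H H0.
  replace (fun x => Rmax (f x) (g x)) with (fun x => (f x + g x + Rabs (f x - g x)) / 2)
    by (extensionality x; symmetry; apply Rmax_abs).
  apply cpt_div; [| apply cpt_const | lra].
  apply cpt_plus; [apply cpt_plus; auto | apply cpt_abs, cpt_minus; auto].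
Qed.

Lemma fold_min_le_init (f : nat -> R) a s : fold_right Rmin a (map f s) <= a.
Proof. induction s; simpl; [lra|]. pose proof (Rmin_r (f a0) (fold_right Rmin a (map f s))); lra. Qed.
Lemma fold_min_le (f : nat -> R) a s x : In x s -> fold_right Rmin a (map f s) <= f x.
Proof.
  induction s; simpl; [tauto|]. intros [->|H].
  - apply Rmin_l.
  - pose proof (Rmin_r (f a0) (fold_right Rmin a (map f s))). specialize (IHs H); lra.
Qed.
Lemma fold_min_ge (f : nat -> R) a s c : c <= a -> (forall x, In x s -> c <= f x) -> c <= fold_right Rmin a (map f s).
Proof.
  intros Ha; induction s; simpl; intros H; auto.
  apply Rmin_glb; auto.
Qed.
Lemma fold_min_att (f : nat -> R) a s : fold_right Rmin a (map f s) = a \/ exists x, In x s /\ fold_right Rmin a (map f s) = f x.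
Proof.
  induction s; simpl; auto.
  set (m := fold_right Rmin a (map f s)) in *.
  unfold Rmin; destruct (Rle_dec (f a0) m).
  - right; exists a0; auto.
  - destruct IHs as [H|[x [H1 H2]]]; auto. right; exists x; auto.
Qed.
Lemma mh_le f L l : (1 <= l <= L)%nat -> min_hops f L <= f l.
Proof. intros H; unfold min_hops; apply fold_min_le, in_seq; lia. Qed.
Lemma mh_ge f L c : (1 <= L)%nat -> (forall l, (1 <= l <= L)%nat -> c <= f l) -> c <= min_hops f L.
Proof.
  intros HL H; unfold min_hops; apply fold_min_ge; [apply H; lia|].
  intros x Hx; apply in_seq in Hx; apply H; lia.
Qed.
Lemma mh_att f L : (1 <= L)%nat -> exists l, (1 <= l <= L)%nat /\ min_hops f L = f l.
Proof.
  intros HL; unfold min_hops; destruct (fold_min_att f (f 1%nat) (seq 1 L)) as [H|[x [H1 H2]]].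
  - exists 1%nat; split; auto; lia.
  - exists x; apply in_seq in H1; split; auto; lia.
Qed.
Lemma mh_cont (h : nat -> R -> R) L c : (1 <= L)%nat ->
  (forall l, (1 <= l <= L)%nat -> continuity_pt (h l) c) ->
  continuity_pt (fun x => min_hops (fun l => h l x) L) c.
Proof.
  intros HL H; unfold min_hops.
  assert (H' : forall l, In l (seq 1 L) -> continuity_pt (h l) c).
  { intros l Hl; apply in_seq in Hl; apply H; lia. }
  revert H'. generalize (seq 1 L); intros s; induction s; simpl; intros H'.
  - apply H; lia.
  - apply cpt_min; auto.
Qed.

Lemma eps_hops (Q : nat -> R -> Prop) L :
  (forall l h h', 0 < h' <= h -> Q l h -> Q l h') ->
  (forall l, (1 <= l <= L)%nat -> exists h, 0 < h /\ Q l h) ->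
  exists h, 0 < h /\ forall l, (1 <= l <= L)%nat -> Q l h.
Proof.
  intros Hm; induction L; intros H.
  - exists 1; split; [lra|]; intros; lia.
  - destruct IHL as [h1 [Hh1 Q1]]. { intros l Hl; apply H; lia. }
    destruct (H (S L)) as [h2 [Hh2 Q2]]; [lia|].
    exists (Rmin h1 h2); split; [apply Rmin_glb_lt; auto|].
    intros l Hl. assert (Hmin1 := Rmin_l h1 h2). assert (Hmin2 := Rmin_r h1 h2).
    assert (0 < Rmin h1 h2) by (apply Rmin_glb_lt; auto).
    destruct (Nat.eq_dec l (S L)) as [->|Hne].
    + apply (Hm _ h2); [lra|auto].
    + apply (Hm _ h1); [lra|]. apply Q1; lia.
Qed.

Lemma Rabs_le_b x b : Rabs x <= b -> -b <= x <= b.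
Proof. unfold Rabs; destruct (Rcase_abs x); lra. Qed.
Lemma Rabs_le_i x b : -b <= x <= b -> Rabs x <= b.
Proof. unfold Rabs; destruct (Rcase_abs x); lra. Qed.

Lemma pert_one u v w z X Y M : 0 <= u -> 0 <= v -> 0 <= w -> 0 <= X -> 0 <= Y -> 0 <= M ->
  u*X + v*Y + w*X*Y < z ->
  exists h0, 0 < h0 /\ forall h X' Y', 0 < h <= h0 -> Rabs (X'-X) <= M*h -> Rabs (Y'-Y) <= M*h ->
   u*X' + v*Y' + w*X'*Y' <= z.
Proof.
  intros Hu Hv Hw HX HY HM Hlt.
  set (s := z - (u*X + v*Y + w*X*Y)).
  set (K := M*(u+v+w*(X+Y+M))).
  assert (HK : 0 <= K) by (unfold K; apply Rmult_le_pos; nra).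
  exists (Rmin 1 (s/(K+1))); split.
  { apply Rmin_glb_lt; [lra|]. apply Rdiv_lt_0_compat; unfold s; lra. }
  intros h X' Y' [Hh Hh0] HdX HdY.
  assert (h <= 1) by (pose proof (Rmin_l 1 (s/(K+1))); lra).
  assert (hK : h * (K+1) <= s).
  { assert (h <= s/(K+1)) by (pose proof (Rmin_r 1 (s/(K+1))); lra).
    apply Rmult_le_reg_r with (/(K+1)); [apply Rinv_0_lt_compat; lra|].
    rewrite Rmult_assoc, Rinv_r by lra. unfold Rdiv in H0. lra. }
  apply Rabs_le_b in HdX. apply Rabs_le_b in HdY.
  set (dx := X' - X) in *. set (dy := Y' - Y) in *.
  replace X' with (X + dx) by (unfold dx; ring).
  replace Y' with (Y + dy) by (unfold dy; ring).
  assert (h1 : u*dx <= u*(M*h)) by nra.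
  assert (h2 : v*dy <= v*(M*h)) by nra.
  assert (h3 : X*dy <= X*(M*h)) by nra.
  assert (h4 : Y*dx <= Y*(M*h)) by nra.
  assert (h5 : dx*dy <= M*h*(M*h)) by nra.
  assert (h6 : M*h*(M*h) <= M*M*h) by (assert (0 <= M*M) by nra; nra).
  assert (h7 : w*(X*dy + Y*dx + dx*dy) <= w*(X*(M*h) + Y*(M*h) + M*M*h)) by nra.
  assert (h8 : h*K <= s) by nra.
  unfold K in h8. unfold s in h8. nra.
Qed.

Definition InD (L:nat) (u1 w1 z1 v2 w2 z2 : nat -> R) X Y :=
  0 <= X /\ 0 <= Y /\ forall l, (1 <= l <= L)%nat ->
    u1 l * X + w1 l * X * Y <= z1 l /\ v2 l * Y + w2 l * X * Y <= z2 l.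
Definition pos6 (L:nat) (u1 w1 z1 v2 w2 z2 : nat -> R) :=
  forall l, (1 <= l <= L)%nat ->
    0 < u1 l /\ 0 < w1 l /\ 0 < z1 l /\ 0 < v2 l /\ 0 < w2 l /\ 0 < z2 l.
Definition FF X Y := (1+X)*(1+Y).

Lemma InD_swap L u1 w1 z1 v2 w2 z2 X Y :
  InD L v2 w2 z2 u1 w1 z1 Y X -> InD L u1 w1 z1 v2 w2 z2 X Y.
Proof.
  intros [H1 [H2 H3]]; split; [|split]; auto.
  intros l Hl; destruct (H3 l Hl) as [A B].
  replace (w1 l * X * Y) with (w1 l * Y * X) by ring.
  replace (w2 l * X * Y) with (w2 l * Y * X) by ring. split; auto.
Qed.
Lemma pos6_swap L u1 w1 z1 v2 w2 z2 : pos6 L u1 w1 z1 v2 w2 z2 -> pos6 L v2 w2 z2 u1 w1 z1.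
Proof. intros H l Hl; destruct (H l Hl) as (?&?&?&?&?&?); repeat split; auto. Qed.

Lemma nbhd L u1 w1 z1 v2 w2 z2 X Y M (S1 S2 : nat -> Prop) :
  pos6 L u1 w1 z1 v2 w2 z2 -> 0 <= X -> 0 <= Y -> 0 <= M ->
  (forall l, (1 <= l <= L)%nat -> S1 l -> u1 l*X + w1 l*X*Y < z1 l) ->
  (forall l, (1 <= l <= L)%nat -> S2 l -> v2 l*Y + w2 l*X*Y < z2 l) ->
  exists h0, 0 < h0 /\ forall l, (1 <= l <= L)%nat -> forall h X' Y', 0 < h <= h0 ->
    Rabs (X'-X) <= M*h -> Rabs (Y'-Y) <= M*h ->
    (S1 l -> u1 l*X' + w1 l*X'*Y' <= z1 l) /\ (S2 l -> v2 l*Y' + w2 l*X'*Y' <= z2 l).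
Proof.
  intros Hp HX HY HM H1 H2.
  apply (eps_hops (fun l h0 => forall h X' Y', 0 < h <= h0 ->
    Rabs (X'-X) <= M*h -> Rabs (Y'-Y) <= M*h ->
    (S1 l -> u1 l*X' + w1 l*X'*Y' <= z1 l) /\ (S2 l -> v2 l*Y' + w2 l*X'*Y' <= z2 l))).
  - intros l h h' Hh Q hh X' Y' Hhh; apply Q; lra.
  - intros l Hl. destruct (Hp l Hl) as (?&?&?&?&?&?).
    assert (E1 : exists e, 0 < e /\ forall h X' Y', 0 < h <= e -> Rabs (X'-X) <= M*h -> Rabs (Y'-Y) <= M*h -> S1 l -> u1 l*X' + w1 l*X'*Y' <= z1 l).
    { destruct (classic (S1 l)) as [Hs|Hs].
      - destruct (pert_one (u1 l) 0 (w1 l) (z1 l) X Y M) as [e [He Q]]; try lra.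
        + specialize (H1 l Hl Hs); lra.
        + exists e; split; auto. intros h X' Y' A B C _. specialize (Q h X' Y' A B C). lra.
      - exists 1; split; [lra|]; tauto. }
    assert (E2 : exists e, 0 < e /\ forall h X' Y', 0 < h <= e -> Rabs (X'-X) <= M*h -> Rabs (Y'-Y) <= M*h -> S2 l -> v2 l*Y' + w2 l*X'*Y' <= z2 l).
    { destruct (classic (S2 l)) as [Hs|Hs].
      - destruct (pert_one 0 (v2 l) (w2 l) (z2 l) X Y M) as [e [He Q]]; try lra.
        + specialize (H2 l Hl Hs); lra.
        + exists e; split; auto. intros h X' Y' A B C _. specialize (Q h X' Y' A B C). lra.
      - exists 1; split; [lra|]; tauto. }
    destruct E1 as [e1 [He1 Q1]]; destruct E2 as [e2 [He2 Q2]].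
    exists (Rmin e1 e2); split; [apply Rmin_glb_lt; auto|].
    pose proof (Rmin_l e1 e2); pose proof (Rmin_r e1 e2).
    intros h X' Y' Hh A B; split; [apply (Q1 h) | apply (Q2 h)]; auto; lra.
Qed.

Lemma improve_none L u1 w1 z1 v2 w2 z2 X Y :
  pos6 L u1 w1 z1 v2 w2 z2 -> InD L u1 w1 z1 v2 w2 z2 X Y ->
  (forall l, (1 <= l <= L)%nat -> u1 l*X + w1 l*X*Y < z1 l /\ v2 l*Y + w2 l*X*Y < z2 l) ->
  exists X' Y', InD L u1 w1 z1 v2 w2 z2 X' Y' /\ FF X Y < FF X' Y'.
Proof.
  intros Hp [HX [HY _]] Hs.
  destruct (nbhd L u1 w1 z1 v2 w2 z2 X Y 1 (fun _ => True) (fun _ => True)) as [h [Hh Q]];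
    [auto|auto|auto|lra|intros l Hl _; apply Hs; auto|intros l Hl _; apply Hs; auto|].
  - exists X, (Y + h); split.
    + split; [|split]; [lra|lra|]. intros l Hl.
      destruct (Q l Hl h X (Y+h)) as [A B]; [lra| | |].
      * replace (X - X) with 0 by ring; rewrite Rabs_R0; lra.
      * replace (Y + h - Y) with h by ring; rewrite Rabs_right; lra.
      * split; [apply A|apply B]; auto.
    + unfold FF; nra.
Qed.

(* algebra along the curve X (u + w Y) = z *)
Lemma curve_conv X Y h c : 0 < X -> 0 < h -> h <= X/2 -> 0 < c ->
  FF X Y < FF (X + h) (Y - c*h/(X+h)) \/ FF X Y < FF (X - h) (Y + c*h/(X-h)).
Proof.
  intros HX Hh Hh2 Hc.
  assert (E : FF (X + h) (Y - c*h/(X+h)) + FF (X - h) (Y + c*h/(X-h)) - 2 * FF X Y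
             = c*h*(2*h/((X-h)*(X+h)))).
  { unfold FF; field; lra. }
  assert (0 < c*h*(2*h/((X-h)*(X+h)))).
  { apply Rmult_lt_0_compat; [nra|]. apply Rdiv_lt_0_compat; nra. }
  destruct (Rlt_or_le (FF X Y) (FF (X + h) (Y - c*h/(X+h)))); [left; auto|right; lra].
Qed.

Lemma improve_oneI L u1 w1 z1 v2 w2 z2 X Y l0 :
  pos6 L u1 w1 z1 v2 w2 z2 -> InD L u1 w1 z1 v2 w2 z2 X Y -> 0 < X -> 0 < Y ->
  (1 <= l0 <= L)%nat ->
  u1 l0 * X + w1 l0 * X * Y = z1 l0 ->
  (forall l, (1 <= l <= L)%nat -> l <> l0 -> u1 l*X + w1 l*X*Y < z1 l) ->
  (forall l, (1 <= l <= L)%nat -> v2 l*Y + w2 l*X*Y < z2 l) ->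
  exists X' Y', InD L u1 w1 z1 v2 w2 z2 X' Y' /\ FF X Y < FF X' Y'.
Proof.
  intros Hp HD HX HY Hl0 Ht Hs1 Hs2.
  destruct (Hp l0 Hl0) as (Hu&Hw&Hz&_).
  set (u := u1 l0) in *. set (w := w1 l0) in *.
  set (c := (u + w*Y)/w).
  assert (Hc : 0 < c) by (unfold c; apply Rdiv_lt_0_compat; nra).
  set (M := 1 + 2*c/X).
  assert (HM : 1 <= M) by (unfold M; assert (0 < 2*c/X) by (apply Rdiv_lt_0_compat; lra); lra).
  destruct (nbhd L u1 w1 z1 v2 w2 z2 X Y M (fun l => l <> l0) (fun _ => True)) as [h0 [Hh0 Q]];
    [auto|lra|lra|lra|intros l Hl Hne; apply Hs1; auto|intros l Hl _; apply Hs2; auto|].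
  set (h := Rmin h0 (Rmin (X/2) (Y/M))).
  assert (Hh : 0 < h).
  { unfold h; apply Rmin_glb_lt; auto; apply Rmin_glb_lt; [lra|apply Rdiv_lt_0_compat; lra]. }
  assert (Hha : h <= h0) by apply Rmin_l.
  assert (Hhb : h <= X/2) by (unfold h; eapply Rle_trans; [apply Rmin_r|apply Rmin_l]).
  assert (Hhc : h <= Y/M) by (unfold h; eapply Rle_trans; [apply Rmin_r|apply Rmin_r]).
  assert (HMh : M * h <= Y).
  { apply Rmult_le_reg_l with (/M); [apply Rinv_0_lt_compat; lra|].
    rewrite <- Rmult_assoc, Rinv_l by lra. unfold Rdiv in Hhc; lra. }
  assert (K1 : c*h/(X+h) <= M*h).
  { unfold M. apply Rle_trans with (c*h/X).
    - unfold Rdiv. apply Rmult_le_compat_l; [nra|]. apply Rinv_le_contravar; lra.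
    - unfold Rdiv. assert (0 < /X) by (apply Rinv_0_lt_compat; lra).
      assert (0 <= c*h*/X) by (apply Rmult_le_pos; nra).
      replace ((1 + 2*c*/X)*h) with (h + 2*(c*h*/X)) by ring. lra. }
  assert (K2 : c*h/(X-h) <= M*h).
  { unfold M. apply Rle_trans with (c*h*(2/X)).
    - unfold Rdiv. apply Rmult_le_compat_l; [nra|].
      replace (2 * /X) with (/(X/2)) by (field; lra). apply Rinv_le_contravar; lra.
    - unfold Rdiv. assert (0 < /X) by (apply Rinv_0_lt_compat; lra).
      assert (0 <= c*h*/X) by (apply Rmult_le_pos; nra).
      replace ((1 + 2*c*/X)*h) with (h + 2*(c*h*/X)) by ring.
      replace (c*h*(2*/X)) with (2*(c*h*/X)) by ring. lra. }
  assert (K0 : 0 <= c*h/(X+h)) by (apply Rmult_le_pos; [nra|left; apply Rinv_0_lt_compat; lra]).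
  assert (K0' : 0 <= c*h/(X-h)) by (apply Rmult_le_pos; [nra|left; apply Rinv_0_lt_compat; lra]).
  assert (Hgood : forall s, s = 1 \/ s = -1 ->
    InD L u1 w1 z1 v2 w2 z2 (X + s*h) (Y - s*(c*h/(X+s*h)))).
  { intros s Hs.
    assert (Bd : Rabs (Y - s*(c*h/(X+s*h)) - Y) <= M*h).
    { apply Rabs_le_i. destruct Hs as [->| ->];
        [replace (X + 1*h) with (X+h) by ring | replace (X + -1*h) with (X-h) by ring]; lra. }
    assert (Bx : Rabs (X + s*h - X) <= M*h).
    { apply Rabs_le_i. destruct Hs as [->| ->]; nra. }
    split; [|split].
    - destruct Hs as [->| ->]; lra.
    - destruct Hs as [->| ->];
        [replace (X + 1*h) with (X+h) by ring | replace (X + -1*h) with (X-h) by ring]; lra.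
    - intros l Hl. destruct (Q l Hl h _ _ (conj Hh Hha) Bx Bd) as [A B].
      split; [|apply B; auto].
      destruct (Nat.eq_dec l l0) as [->|Hne]; [|apply A; auto].
      fold u w. apply Req_le.
      assert (X + s*h <> 0) by (destruct Hs as [->| ->]; lra).
      unfold c. rewrite <- Ht. field. split; lra. }
  destruct (curve_conv X Y h c HX Hh Hhb Hc) as [G|G].
  - exists (X + 1*h), (Y - 1*(c*h/(X+1*h))); split; [apply Hgood; auto|].
    replace (X + 1*h) with (X+h) by ring. replace (Y - 1*(c*h/(X+h))) with (Y - c*h/(X+h)) by ring. auto.
  - exists (X + -1*h), (Y - -1*(c*h/(X+ -1*h))); split; [apply Hgood; auto|].
    replace (X + -1*h) with (X-h) by ring. replace (Y - -1*(c*h/(X-h))) with (Y + c*h/(X-h)) by ring. auto.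
Qed.

Lemma improve_oneII L u1 w1 z1 v2 w2 z2 X Y l0 :
  pos6 L u1 w1 z1 v2 w2 z2 -> InD L u1 w1 z1 v2 w2 z2 X Y -> 0 < X -> 0 < Y ->
  (1 <= l0 <= L)%nat ->
  v2 l0 * Y + w2 l0 * X * Y = z2 l0 ->
  (forall l, (1 <= l <= L)%nat -> l <> l0 -> v2 l*Y + w2 l*X*Y < z2 l) ->
  (forall l, (1 <= l <= L)%nat -> u1 l*X + w1 l*X*Y < z1 l) ->
  exists X' Y', InD L u1 w1 z1 v2 w2 z2 X' Y' /\ FF X Y < FF X' Y'.
Proof.
  intros Hp HD HX HY Hl0 Ht Hs1 Hs2.
  destruct (improve_oneI L v2 w2 z2 u1 w1 z1 Y X l0) as [Y' [X' [H1 H2]]]; auto.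
  - apply pos6_swap; auto.
  - destruct HD as [A [B C]]; split; [|split]; auto. intros l Hl; destruct (C l Hl) as [D E].
    replace (w2 l * Y * X) with (w2 l * X * Y) by ring.
    replace (w1 l * Y * X) with (w1 l * X * Y) by ring. auto.
  - replace (w2 l0 * Y * X) with (w2 l0 * X * Y) by ring. auto.
  - intros l Hl Hne; replace (w2 l * Y * X) with (w2 l * X * Y) by ring; auto.
  - intros l Hl; replace (w1 l * Y * X) with (w1 l * X * Y) by ring; auto.
  - exists X', Y'; split; [apply InD_swap; auto|]. unfold FF in *; lra.
Qed.

Lemma exists_opt L u1 w1 z1 v2 w2 z2 : (1 <= L)%nat -> pos6 L u1 w1 z1 v2 w2 z2 ->
  exists X Y, InD L u1 w1 z1 v2 w2 z2 X Y /\
    forall X' Y', InD L u1 w1 z1 v2 w2 z2 X' Y' -> FF X' Y' <= FF X Y.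
Proof.
  intros HL Hp.
  destruct (Hp 1%nat ltac:(lia)) as (_&_&_&Hv1&Hw1&Hz1).
  set (G := z2 1%nat / v2 1%nat).
  assert (HG : 0 < G) by (apply Rdiv_lt_0_compat; auto).
  set (x0 := min_hops (fun l => z1 l / (u1 l + w1 l * G)) L).
  set (Xm := min_hops (fun l => z1 l / u1 l) L).
  assert (Hx0 : 0 < x0).
  { destruct (mh_att (fun l => z1 l / (u1 l + w1 l * G)) L HL) as [l [Hl E]].
    unfold x0; rewrite E. destruct (Hp l Hl) as (?&?&?&_). apply Rdiv_lt_0_compat; nra. }
  assert (Hx0l : forall l, (1 <= l <= L)%nat -> x0 * (u1 l + w1 l * G) <= z1 l).
  { intros l Hl. destruct (Hp l Hl) as (?&?&?&_).
    pose proof (mh_le (fun l => z1 l / (u1 l + w1 l * G)) L l Hl). fold x0 in H2. simpl in H2.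
    apply Rmult_le_compat_r with (r := u1 l + w1 l * G) in H2; [|nra].
    replace (z1 l / (u1 l + w1 l * G) * (u1 l + w1 l * G)) with (z1 l) in H2 by (field; nra). lra. }
  assert (HXml : forall l, (1 <= l <= L)%nat -> u1 l * Xm <= z1 l).
  { intros l Hl. destruct (Hp l Hl) as (?&?&?&_).
    pose proof (mh_le (fun l => z1 l / u1 l) L l Hl). fold Xm in H2. simpl in H2.
    apply Rmult_le_compat_l with (r := u1 l) in H2; [|lra].
    replace (u1 l * (z1 l / u1 l)) with (z1 l) in H2 by (field; lra). lra. }
  assert (Hx0Xm : x0 <= Xm).
  { apply mh_ge; auto. intros l Hl. destruct (Hp l Hl) as (?&?&?&_).
    specialize (Hx0l l Hl).
    apply Rmult_le_reg_l with (u1 l); [lra|].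
    replace (u1 l * (z1 l / u1 l)) with (z1 l) by (field; lra).
    assert (0 <= x0 * (w1 l * G)) by (apply Rmult_le_pos; nra). nra. }
  set (term := fun l X => Rmin (z2 l / (v2 l + w2 l * X)) ((z1 l - u1 l * X) / (w1 l * Rmax X x0))).
  set (Ym := fun X => min_hops (fun l => term l X) L).
  assert (Hcont : forall c, 0 <= c <= Xm -> continuity_pt (fun X => FF X (Ym X)) c).
  { intros c Hc. unfold FF. apply cpt_mult; [apply cpt_plus; [apply cpt_const|apply cpt_id]|].
    apply cpt_plus; [apply cpt_const|]. unfold Ym. apply mh_cont; auto. intros l Hl.
    destruct (Hp l Hl) as (?&?&?&?&?&?).
    unfold term. apply cpt_min.
    - apply cpt_div; [apply cpt_const| apply cpt_plus; [apply cpt_const|apply cpt_mult; [apply cpt_const|apply cpt_id]]|].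
      nra.
    - apply cpt_div; [apply cpt_minus; [apply cpt_const|apply cpt_mult; [apply cpt_const|apply cpt_id]]|
                      apply cpt_mult; [apply cpt_const|apply cpt_max; [apply cpt_id|apply cpt_const]]|].
      pose proof (Rmax_r c x0). nra. }
  assert (HYmG : forall X, 0 <= X -> Ym X <= G).
  { intros X HX. unfold Ym. eapply Rle_trans; [apply (mh_le _ L 1%nat); lia|].
    unfold term. eapply Rle_trans; [apply Rmin_l|]. unfold G.
    unfold Rdiv. apply Rmult_le_compat_l; [lra|]. apply Rinv_le_contravar; [lra|]. nra. }
  assert (E1 : forall X, 0 <= X <= Xm -> InD L u1 w1 z1 v2 w2 z2 X (Ym X)).
  { intros X HX.
    assert (HY0 : 0 <= Ym X).
    { unfold Ym; apply mh_ge; auto. intros l Hl. destruct (Hp l Hl) as (?&?&?&?&?&?).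
      specialize (HXml l Hl). unfold term. apply Rmin_glb.
      - left; apply Rdiv_lt_0_compat; nra.
      - pose proof (Rmax_r X x0). apply Rmult_le_pos; [nra|left; apply Rinv_0_lt_compat; nra]. }
    split; [lra|split; auto]. intros l Hl. destruct (Hp l Hl) as (?&?&?&?&?&?).
    assert (Hle : Ym X <= term l X) by (apply (mh_le (fun l => term l X)); auto).
    unfold term in Hle.
    pose proof (Rmin_l (z2 l / (v2 l + w2 l * X)) ((z1 l - u1 l * X) / (w1 l * Rmax X x0))) as M1.
    pose proof (Rmin_r (z2 l / (v2 l + w2 l * X)) ((z1 l - u1 l * X) / (w1 l * Rmax X x0))) as M2.
    split.
    - destruct (Rle_dec x0 X) as [Hxx|Hxx].
      + rewrite Rmax_left in M2, Hle by lra.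
        assert (Ym X <= (z1 l - u1 l * X) / (w1 l * X)) by lra.
        apply Rmult_le_compat_l with (r := w1 l * X) in H5; [|nra].
        replace (w1 l * X * ((z1 l - u1 l * X) / (w1 l * X))) with (z1 l - u1 l * X) in H5 by (field; nra).
        nra.
      + specialize (Hx0l l Hl). specialize (HYmG X ltac:(lra)).
        assert (w1 l * X * Ym X <= w1 l * x0 * G).
        { apply Rmult_le_compat; nra. }
        nra.
    - assert (Ym X <= z2 l / (v2 l + w2 l * X)) by lra.
      apply Rmult_le_compat_l with (r := v2 l + w2 l * X) in H5; [|nra].
      replace ((v2 l + w2 l * X) * (z2 l / (v2 l + w2 l * X))) with (z2 l) in H5 by (field; nra).
      nra. }
  assert (E2 : forall X Y, InD L u1 w1 z1 v2 w2 z2 X Y -> X <= Xm /\ Y <= Ym X).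
  { intros X Y [HX [HY HC]]. split.
    - unfold Xm; apply mh_ge; auto. intros l Hl. destruct (Hp l Hl) as (?&?&?&?&?&?).
      destruct (HC l Hl) as [C1 C2].
      apply Rmult_le_reg_l with (u1 l); [lra|].
      replace (u1 l * (z1 l / u1 l)) with (z1 l) by (field; lra).
      assert (0 <= w1 l * X * Y) by (apply Rmult_le_pos; nra). lra.
    - assert (YG : Y <= G).
      { destruct (HC 1%nat ltac:(lia)) as [_ C2]. unfold G.
        apply Rmult_le_reg_l with (v2 1%nat); [lra|].
        replace (v2 1%nat * (z2 1%nat / v2 1%nat)) with (z2 1%nat) by (field; lra).
        assert (0 <= w2 1%nat * X * Y) by (apply Rmult_le_pos; nra). lra. }
      unfold Ym; apply mh_ge; auto. intros l Hl. destruct (Hp l Hl) as (?&?&?&?&?&?).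
      destruct (HC l Hl) as [C1 C2]. unfold term. apply Rmin_glb.
      + apply Rmult_le_reg_l with (v2 l + w2 l * X); [nra|].
        replace ((v2 l + w2 l * X) * (z2 l / (v2 l + w2 l * X))) with (z2 l) by (field; nra). nra.
      + destruct (Rle_dec x0 X) as [Hxx|Hxx].
        * rewrite Rmax_left by lra.
          apply Rmult_le_reg_l with (w1 l * X); [nra|].
          replace (w1 l * X * ((z1 l - u1 l * X) / (w1 l * X))) with (z1 l - u1 l * X) by (field; nra). nra.
        * rewrite Rmax_right by lra.
          apply Rmult_le_reg_l with (w1 l * x0); [nra|].
          replace (w1 l * x0 * ((z1 l - u1 l * X) / (w1 l * x0))) with (z1 l - u1 l * X) by (field; nra).
          specialize (Hx0l l Hl).
          assert (w1 l * x0 * Y <= w1 l * x0 * G) by (apply Rmult_le_compat_l; nra).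
          nra. }
  assert (HXm0 : 0 <= Xm) by lra.
  destruct (continuity_ab_maj (fun X => FF X (Ym X)) 0 Xm HXm0 Hcont) as [Mx [HMx HMxr]].
  exists Mx, (Ym Mx); split; [apply E1; auto|].
  intros X' Y' HD. destruct (E2 X' Y' HD) as [A B]. destruct HD as [HX [HY _]].
  eapply Rle_trans; [|apply (HMx X'); lra]. unfold FF. nra.
Qed.

Definition tightf (u1 w1 z1 v2 w2 z2 : nat -> R) (i l : nat) X Y :=
  (i = 1%nat /\ u1 l * X + w1 l * X * Y = z1 l) \/ (i = 2%nat /\ v2 l * Y + w2 l * X * Y = z2 l).

Lemma opt_Q L u1 w1 z1 v2 w2 z2 : (1 <= L)%nat -> pos6 L u1 w1 z1 v2 w2 z2 ->
  exists X Y, InD L u1 w1 z1 v2 w2 z2 X Y /\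
    (forall X' Y', InD L u1 w1 z1 v2 w2 z2 X' Y' -> FF X' Y' <= FF X Y) /\
    (X = 0 \/ Y = 0 \/ exists i1 l1 i2 l2, (1 <= l1 <= L)%nat /\ (1 <= l2 <= L)%nat /\
       (i1 <> i2 \/ l1 <> l2) /\ tightf u1 w1 z1 v2 w2 z2 i1 l1 X Y /\ tightf u1 w1 z1 v2 w2 z2 i2 l2 X Y).
Proof.
  intros HL Hp. destruct (exists_opt L u1 w1 z1 v2 w2 z2 HL Hp) as [X [Y [HD Hopt]]].
  exists X, Y; split; [auto|split; [auto|]].
  destruct (classic (X = 0)) as [H0|HX0]; [left; auto|right].
  destruct (classic (Y = 0)) as [H0|HY0]; [left; auto|right].
  pose proof HD as [HX [HY HC]].
  assert (HXp : 0 < X) by lra. assert (HYp : 0 < Y) by lra.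
  apply NNPP; intro Hno.
  assert (Contra : forall X' Y', InD L u1 w1 z1 v2 w2 z2 X' Y' -> FF X Y < FF X' Y' -> False).
  { intros X' Y' A B; specialize (Hopt X' Y' A); lra. }
  destruct (classic (exists l0, (1 <= l0 <= L)%nat /\ u1 l0 * X + w1 l0 * X * Y = z1 l0)) as [[l0 [Hl0 Ht]]|NT1].
  - destruct (improve_oneI L u1 w1 z1 v2 w2 z2 X Y l0) as [X' [Y' [A B]]]; auto.
    + intros l Hl Hne. destruct (HC l Hl) as [C1 _]. destruct (Rle_lt_or_eq_dec _ _ C1) as [|E]; auto.
      exfalso; apply Hno. exists 1%nat, l0, 1%nat, l.
      unfold tightf; split; [lia|split; [lia|split; [right; lia|split; left; split; auto]]].
    + intros l Hl. destruct (HC l Hl) as [_ C2]. destruct (Rle_lt_or_eq_dec _ _ C2) as [|E]; auto.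
      exfalso; apply Hno. exists 1%nat, l0, 2%nat, l.
      unfold tightf; split; [lia|split; [lia|split; [left; lia|split; [left|right]; split; auto]]].
    + eapply Contra; eauto.
  - destruct (classic (exists l0, (1 <= l0 <= L)%nat /\ v2 l0 * Y + w2 l0 * X * Y = z2 l0)) as [[l0 [Hl0 Ht]]|NT2].
    + destruct (improve_oneII L u1 w1 z1 v2 w2 z2 X Y l0) as [X' [Y' [A B]]]; auto.
      * intros l Hl Hne. destruct (HC l Hl) as [_ C2]. destruct (Rle_lt_or_eq_dec _ _ C2) as [|E]; auto.
        exfalso; apply Hno. exists 2%nat, l0, 2%nat, l.
        unfold tightf; split; [lia|split; [lia|split; [right; lia|split; right; split; auto]]].
      * intros l Hl. destruct (HC l Hl) as [C1 _]. destruct (Rle_lt_or_eq_dec _ _ C1) as [|E]; auto.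
        exfalso; apply NT1; exists l; auto.
      * eapply Contra; eauto.
    + destruct (improve_none L u1 w1 z1 v2 w2 z2 X Y) as [X' [Y' [A B]]]; auto.
      * intros l Hl. destruct (HC l Hl) as [C1 C2]. split.
        -- destruct (Rle_lt_or_eq_dec _ _ C1) as [|E]; auto. exfalso; apply NT1; exists l; auto.
        -- destruct (Rle_lt_or_eq_dec _ _ C2) as [|E]; auto. exfalso; apply NT2; exists l; auto.
      * eapply Contra; eauto.
Qed.

Ltac pos := repeat (apply Rmult_le_pos || apply Rplus_le_le_0_compat); lra.

Lemma hop_bound g11 g12 g21 g22 s P p1 p2 X Y :
  0 < g11 -> 0 < g12 -> 0 < g21 -> 0 < g22 -> 0 < s -> 0 < P ->
  0 <= p1 <= P -> 0 <= p2 <= P -> 0 <= X -> 0 <= Y ->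
  X * (s + p2 * g21) <= p1 * g11 -> Y * (s + p1 * g12) <= p2 * g22 ->
  s * g22 * X + (s * g21 + P * g12 * g21) * X * Y <= P * g11 * g22.
Proof.
  intros H11 H12 H21 H22 Hs HP Hp1 Hp2 HX HY A B.
  set (K := g11 * g22 - X * Y * g12 * g21).
  set (R := X * s * g22 + X * Y * s * g21).
  assert (HR : 0 <= R) by (unfold R; pos).
  assert (S1 : g22 * (p1 * g11) >= g22 * (X * (s + p2 * g21))) by nra.
  assert (S2 : X * g21 * (p2 * g22) >= X * g21 * (Y * (s + p1 * g12))) by (apply Rle_ge, Rmult_le_compat_l; [pos|lra]).
  assert (S3 : p1 * K >= R) by (unfold K, R; nra).
  destruct (Rle_lt_dec 0 K) as [HK|HK].
  - assert (P * K >= p1 * K) by nra. unfold K, R in *. nra.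
  - assert (p1 * K <= 0) by nra.
    assert (X * s * g22 = 0) by (unfold R in *; assert (0 <= X * Y * s * g21) by pos; assert (0 <= X * s * g22) by pos; lra).
    assert (X = 0) by (destruct (Rmult_integral _ _ H0) as [E|E]; [destruct (Rmult_integral _ _ E); lra|lra]).
    subst X. unfold K in HK. nra.
Qed.

Lemma hop_match g11 g12 g21 g22 s P X Y :
  0 < g11 -> 0 < g12 -> 0 < g21 -> 0 < g22 -> 0 < s -> 0 < P -> 0 <= X -> 0 <= Y ->
  s * g22 * X + (s * g21 + P * g12 * g21) * X * Y <= P * g11 * g22 ->
  s * g11 * Y + (s * g12 + P * g12 * g21) * X * Y <= P * g11 * g22 ->
  let D := g11 * g22 - X * Y * g12 * g21 in
  let a := X * s * (g22 + Y * g21) / D in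
  let b := Y * s * (g11 + X * g12) / D in
  0 < D /\ 0 <= a <= P /\ 0 <= b <= P /\ a * g11 / (s + b * g21) = X /\ b * g22 / (s + a * g12) = Y /\
  (s * g22 * X + (s * g21 + P * g12 * g21) * X * Y = P * g11 * g22 -> a = P) /\
  (s * g11 * Y + (s * g12 + P * g12 * g21) * X * Y = P * g11 * g22 -> b = P) /\
  (X = 0 -> a = 0) /\ (Y = 0 -> b = 0).
Proof.
  intros H11 H12 H21 H22 Hs HP HX HY C1 C2 D a b.
  assert (HXY : 0 <= X * Y) by nra.
  assert (HD : 0 < D).
  { unfold D. destruct (Rle_lt_or_eq_dec 0 X HX) as [Xp|X0].
    - assert (0 < s * g22 * X) by (apply Rmult_lt_0_compat; nra).
      assert (0 <= s * g21 * X * Y) by (assert (0 <= s*g21) by nra; nra).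
      assert (P * (X * Y * g12 * g21) < P * (g11 * g22)) by nra.
      apply Rmult_lt_reg_l in H1; lra.
    - subst X. nra. }
  assert (Ea : a * D = X * s * (g22 + Y * g21)) by (unfold a; field; lra).
  assert (Eb : b * D = Y * s * (g11 + X * g12)) by (unfold b; field; lra).
  assert (Ha0 : 0 <= a).
  { unfold a. apply Rmult_le_pos; [|left; apply Rinv_0_lt_compat; auto]. 
    assert (0 <= X * s) by nra. assert (0 <= Y * g21) by nra. nra. }
  assert (Hb0 : 0 <= b).
  { unfold b. apply Rmult_le_pos; [|left; apply Rinv_0_lt_compat; auto].
    assert (0 <= Y * s) by nra. assert (0 <= X * g12) by nra. nra. }
  assert (Ka : a * D - P * D = s * g22 * X + (s * g21 + P * g12 * g21) * X * Y - P * g11 * g22)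
    by (rewrite Ea; unfold D; ring).
  assert (Kb : b * D - P * D = s * g11 * Y + (s * g12 + P * g12 * g21) * X * Y - P * g11 * g22)
    by (rewrite Eb; unfold D; ring).
  split; [auto|]. split; [split; [auto|]|]. 
  { apply Rmult_le_reg_r with D; auto. lra. }
  split; [split; [auto|]|].
  { apply Rmult_le_reg_r with D; auto. lra. }
  assert (Den1 : s + b * g21 = s * g11 * (g22 + Y * g21) / D).
  { clear -HD. unfold b, D in *. field. lra. }
  assert (Den2 : s + a * g12 = s * g22 * (g11 + X * g12) / D).
  { clear -HD. unfold a, D in *. field. lra. }
  assert (0 < g22 + Y * g21) by nra. assert (0 < g11 + X * g12) by nra.
  split; [rewrite Den1; unfold a; field; repeat split; lra|].
  split; [rewrite Den2; unfold b; field; repeat split; lra|].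
  split; [intros E; apply Rmult_eq_reg_r with D; lra|].
  split; [intros E; apply Rmult_eq_reg_r with D; lra|].
  split; intros ->; [unfold a|unfold b]; unfold Rdiv; ring.
Qed.

Lemma log_cmp Xp Yp X Y : 0 <= Xp -> 0 <= Yp -> 0 <= X -> 0 <= Y -> FF Xp Yp <= FF X Y ->
  log2 (1 + Xp) + log2 (1 + Yp) <= log2 (1 + X) + log2 (1 + Y).
Proof.
  intros A B C D H. unfold log2, FF in *.
  assert (Hl2 : 0 < ln 2) by (pose proof ln_lt_2; lra).
  assert (E : ln (1 + Xp) + ln (1 + Yp) <= ln (1 + X) + ln (1 + Y)).
  { rewrite <- !ln_mult by lra.
    destruct (Rle_lt_or_eq_dec _ _ H) as [Hlt|Heq].
    - left; apply ln_increasing; [nra|auto].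
    - rewrite Heq; lra. }
  unfold Rdiv. rewrite <- !Rmult_plus_distr_r.
  apply Rmult_le_compat_r; [left; apply Rinv_0_lt_compat; auto|auto].
Qed.

Lemma mh_const f L c : (1 <= L)%nat -> (forall l, (1 <= l <= L)%nat -> f l = c) -> min_hops f L = c.
Proof.
  intros HL H. apply Rle_antisym.
  - rewrite <- (H 1%nat) by lia. apply mh_le; lia.
  - apply mh_ge; auto. intros l Hl; rewrite (H l Hl); lra.
Qed.

Lemma le_div_mul x n d : 0 < d -> x <= n / d -> x * d <= n.
Proof.
  intros Hd H. apply Rmult_le_compat_r with (r := d) in H; [|lra].
  replace (n / d * d) with n in H by (field; lra). auto.
Qed.

Theorem theorem1 (L : nat) (Pmax sigma2 : R) (g : nat -> nat -> nat -> R)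
  (HL : (2 <= L)%nat) (HP : 0 < Pmax) (Hs : 0 < sigma2)
  (Hg : forall j i l, is_user j -> is_user i -> (1 <= l <= L)%nat -> 0 < g j i l) :
  exists pstar : nat -> nat -> R,
    feasible L Pmax pstar /\
    (forall p, feasible L Pmax p -> sum_rate L g sigma2 p <= sum_rate L g sigma2 pstar) /\
    (exists i1 k1 i2 k2,
        is_user i1 /\ (k1 < L)%nat /\ is_user i2 /\ (k2 < L)%nat /\
        (i1 <> i2 \/ k1 <> k2) /\
        (pstar i1 k1 = 0 \/ pstar i1 k1 = Pmax) /\
        (pstar i2 k2 = 0 \/ pstar i2 k2 = Pmax)) /\
    (forall i l, is_user i -> (2 <= l <= L)%nat ->
        sinr g sigma2 pstar i 1 = sinr g sigma2 pstar i l).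
Proof.
  assert (U1 : is_user 1%nat) by (left; reflexivity).
  assert (U2 : is_user 2%nat) by (right; reflexivity).
  assert (G11 : forall l, (1 <= l <= L)%nat -> 0 < g 1%nat 1%nat l) by (intros; apply Hg; auto).
  assert (G12 : forall l, (1 <= l <= L)%nat -> 0 < g 1%nat 2%nat l) by (intros; apply Hg; auto).
  assert (G21 : forall l, (1 <= l <= L)%nat -> 0 < g 2%nat 1%nat l) by (intros; apply Hg; auto).
  assert (G22 : forall l, (1 <= l <= L)%nat -> 0 < g 2%nat 2%nat l) by (intros; apply Hg; auto).
  set (u1 := fun l => sigma2 * g 2%nat 2%nat l).
  set (w1 := fun l => sigma2 * g 2%nat 1%nat l + Pmax * g 1%nat 2%nat l * g 2%nat 1%nat l).
  set (z1 := fun l => Pmax * g 1%nat 1%nat l * g 2%nat 2%nat l).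
  set (v2 := fun l => sigma2 * g 1%nat 1%nat l).
  set (w2 := fun l => sigma2 * g 1%nat 2%nat l + Pmax * g 1%nat 2%nat l * g 2%nat 1%nat l).
  assert (Hp : pos6 L u1 w1 z1 v2 w2 z1).
  { intros l Hl. specialize (G11 l Hl); specialize (G12 l Hl); specialize (G21 l Hl); specialize (G22 l Hl).
    unfold u1, w1, z1, v2, w2. repeat split; try apply Rmult_lt_0_compat; try apply Rplus_lt_0_compat;
      repeat apply Rmult_lt_0_compat; auto. }
  destruct (opt_Q L u1 w1 z1 v2 w2 z1 ltac:(lia) Hp) as [X [Y [HD [Hopt HQ]]]].
  set (Dn := fun l => g 1%nat 1%nat l * g 2%nat 2%nat l - X * Y * g 1%nat 2%nat l * g 2%nat 1%nat l).
  set (a := fun l => X * sigma2 * (g 2%nat 2%nat l + Y * g 2%nat 1%nat l) / Dn l).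
  set (b := fun l => Y * sigma2 * (g 1%nat 1%nat l + X * g 1%nat 2%nat l) / Dn l).
  set (pstar := fun i k => if Nat.eqb i 1 then a (S k) else b (S k)).
  assert (P1E : forall k, pstar 1%nat k = a (S k)) by reflexivity.
  assert (P2E : forall k, pstar 2%nat k = b (S k)) by reflexivity.
  assert (O1 : other 1 = 2%nat) by reflexivity.
  assert (O2 : other 2 = 1%nat) by reflexivity.
  pose proof HD as [HX [HY HC]].
  assert (HM : forall l, (1 <= l <= L)%nat ->
    0 < Dn l /\ 0 <= a l <= Pmax /\ 0 <= b l <= Pmax /\
    a l * g 1%nat 1%nat l / (sigma2 + b l * g 2%nat 1%nat l) = X /\
    b l * g 2%nat 2%nat l / (sigma2 + a l * g 1%nat 2%nat l) = Y /\
    (u1 l * X + w1 l * X * Y = z1 l -> a l = Pmax) /\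
    (v2 l * Y + w2 l * X * Y = z1 l -> b l = Pmax) /\
    (X = 0 -> a l = 0) /\ (Y = 0 -> b l = 0)).
  { intros l Hl. destruct (HC l Hl) as [C1 C2].
    pose proof (hop_match (g 1%nat 1%nat l) (g 1%nat 2%nat l) (g 2%nat 1%nat l) (g 2%nat 2%nat l)
      sigma2 Pmax X Y (G11 l Hl) (G12 l Hl) (G21 l Hl) (G22 l Hl) Hs HP HX HY C1 C2) as H.
    cbv zeta in H. exact H. }
  assert (S1 : forall l, (1 <= l <= L)%nat -> sinr g sigma2 pstar 1 l = X).
  { intros l Hl. unfold sinr. rewrite O1, P1E, P2E. replace (S (l - 1)) with l by lia.
    apply HM; auto. }
  assert (S2 : forall l, (1 <= l <= L)%nat -> sinr g sigma2 pstar 2 l = Y).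
  { intros l Hl. unfold sinr. rewrite O2, P1E, P2E. replace (S (l - 1)) with l by lia.
    apply HM; auto. }
  exists pstar. split; [|split; [|split]].
  - intros i k Hi Hk. destruct (HM (S k) ltac:(lia)) as (_&Ha&Hb&_).
    destruct Hi as [-> | ->]; [rewrite P1E | rewrite P2E]; auto.
  - intros p Hfp.
    assert (Hsn : forall i l, is_user i -> (1 <= l <= L)%nat -> 0 <= sinr g sigma2 p i l).
    { intros i l Hi Hl. unfold sinr.
      assert (Ho : is_user (other i)) by (destruct Hi as [-> | ->]; [right|left]; reflexivity).
      destruct (Hfp i (l-1)%nat Hi ltac:(lia)). destruct (Hfp (other i) (l-1)%nat Ho ltac:(lia)).
      assert (0 < g i i l) by (apply Hg; auto). assert (0 < g (other i) i l) by (apply Hg; auto).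
      apply Rmult_le_pos; [nra|left; apply Rinv_0_lt_compat; nra]. }
    set (Xp := min_hops (sinr g sigma2 p 1) L).
    set (Yp := min_hops (sinr g sigma2 p 2) L).
    assert (HXp : 0 <= Xp) by (apply mh_ge; [lia|]; intros; apply Hsn; auto).
    assert (HYp : 0 <= Yp) by (apply mh_ge; [lia|]; intros; apply Hsn; auto).
    assert (HDp : InD L u1 w1 z1 v2 w2 z1 Xp Yp).
    { split; [auto|split; [auto|]]. intros l Hl.
      destruct (Hfp 1%nat (l-1)%nat U1 ltac:(lia)) as [p1a p1b].
      destruct (Hfp 2%nat (l-1)%nat U2 ltac:(lia)) as [p2a p2b].
      specialize (G11 l Hl); specialize (G12 l Hl); specialize (G21 l Hl); specialize (G22 l Hl).
      assert (A : Xp * (sigma2 + p 2%nat (l-1)%nat * g 2%nat 1%nat l) <= p 1%nat (l-1)%nat * g 1%nat 1%nat l).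
      { apply le_div_mul; [nra|]. pose proof (mh_le (sinr g sigma2 p 1) L l Hl). fold Xp in H.
        unfold sinr in H. rewrite O1 in H. auto. }
      assert (B : Yp * (sigma2 + p 1%nat (l-1)%nat * g 1%nat 2%nat l) <= p 2%nat (l-1)%nat * g 2%nat 2%nat l).
      { apply le_div_mul; [nra|]. pose proof (mh_le (sinr g sigma2 p 2) L l Hl). fold Yp in H.
        unfold sinr in H. rewrite O2 in H. auto. }
      split.
      + exact (hop_bound _ _ _ _ _ _ _ _ _ _ G11 G12 G21 G22 Hs HP (conj p1a p1b) (conj p2a p2b) HXp HYp A B).
      + pose proof (hop_bound _ _ _ _ _ _ _ _ _ _ G22 G21 G12 G11 Hs HP (conj p2a p2b) (conj p1a p1b) HYp HXp B A).
        unfold v2, w2, z1. nra. }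
    unfold sum_rate. fold Xp Yp.
    rewrite (mh_const _ L X ltac:(lia) S1), (mh_const _ L Y ltac:(lia) S2).
    apply log_cmp; auto.
  - destruct HQ as [X0 | [Y0 | [i1 [l1 [i2 [l2 [Hl1 [Hl2 [Hne [T1 T2]]]]]]]]]].
    + exists 1%nat, 0%nat, 1%nat, 1%nat. split; [auto|split; [lia|split; [auto|split; [lia|split; [right; lia|]]]]].
      rewrite !P1E. split; left; apply HM; auto; lia.
    + exists 2%nat, 0%nat, 2%nat, 1%nat. split; [auto|split; [lia|split; [auto|split; [lia|split; [right; lia|]]]]].
      rewrite !P2E. split; left; apply HM; auto; lia.
    + assert (TT : forall i l, (1 <= l <= L)%nat -> tightf u1 w1 z1 v2 w2 z1 i l X Y ->
                     is_user i /\ pstar i (l-1)%nat = Pmax).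
      { intros i l Hl [[-> T]|[-> T]]; split; auto.
        - rewrite P1E; replace (S (l-1)) with l by lia. apply HM; auto.
        - rewrite P2E; replace (S (l-1)) with l by lia. apply HM; auto. }
      destruct (TT i1 l1 Hl1 T1) as [Ui1 E1]. destruct (TT i2 l2 Hl2 T2) as [Ui2 E2].
      exists i1, (l1-1)%nat, i2, (l2-1)%nat.
      split; [auto|split; [lia|split; [auto|split; [lia|split; [|split; right; auto]]]]].
      destruct Hne; [left; auto|right; lia].
  - intros i l Hi Hl. destruct Hi as [-> | ->].
    + rewrite S1, S1; auto; lia.
    + rewrite S2, S2; auto; lia.
Qed.
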